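(* Let $\mathcal E$ be a nest on a complex Banach space $X$ and let $\mathcal J$ be a $\mathcal T(\mathcal E)$-bimodule. Let $\mathcal J_0$ be the set of finite rank operators in $\mathcal J$ and $\overline{\mathcal J_0}$ its norm closure. Then $\Phi_{\mathcal J_0}=\Phi_{\overline{\mathcal J_0}}=\Phi_{\mathcal J}$.
   Context: A nest $\mathcal E$ on $X$ is a family of closed linear subspaces of $X$, totally ordered by inclusion, containing $\{0\}$ and $X$, closed under arbitrary meets (intersections) and joins (norm-closed linear spans of unions). $\mathcal T(\mathcal E)=\{T\in\mathcal B(X): TE\subseteq E\ \forall E\in\mathcal E\}$. A $\mathcal T(\mathcal E)$-bimodule is a linear subspace $\mathcal J\subseteq\mathcal B(X)$ with $\mathcal T(\mathcal E)\mathcal J\subseteq\mathcal J$ and $\mathcal J\mathcal T(\mathcal E)\subseteq\mathcal J$ ($\mathcal J_0$ and $\overline{\mathcal J_0}$ are again bimodules). For a bimodule $\mathcal J$, $\Phi_{\mathcal J}:\mathcal E\to\mathcal E$ is $\Phi_{\mathcal J}(E)=[\mathcal JE]$, the norm-closed linear span of $\{Tx:T\in\mathcal J,x\in E\}$. *)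

(* Defs.v *)
From HB Require Import structures.
From mathcomp Require Import all_boot all_order all_algebra.
From mathcomp Require Import all_classical all_reals all_analysis.
From mathcomp Require Import complex.
Import Order.TTheory GRing.Theory Num.Theory.
Import numFieldNormedType.Exports.

Set Implicit Arguments.
Unset Strict Implicit.
Unset Printing Implicit Defensive.

Local Open Scope classical_set_scope.
Local Open Scope ring_scope.

Section Nests.
Context {R : realType} {X : completeNormedModType R[i]}.

Definition lspan (S : set X) : set X :=
  [set v | exists (n : nat) (c : 'I_n -> R[i]) (s : 'I_n -> X),
             (forall i, S (s i)) /\ v = \sum_(i < n) c i *: s i].

Definition clspan (S : set X) : set X := closure (lspan S).

Definition closed_subspace (E : set X) : Prop :=
  [/\ closed E, E 0 & forall (a : R[i]) (u v : X), E u -> E v -> E (a *: u + v)].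

Definition bounded_op (T : X -> X) : Prop :=
  (forall (a : R[i]) (u v : X), T (a *: u + v) = a *: T u + T v) /\ continuous T.

Definition nest (N : set (set X)) : Prop :=
  [/\ (forall E, N E -> closed_subspace E),
      (forall E F, N E -> N F -> E `<=` F \/ F `<=` E),
      N [set 0] /\ N setT,
      (forall F, F `<=` N -> N (\bigcap_(E in F) E))
    & (forall F, F `<=` N -> N (clspan (\bigcup_(E in F) E)))].

Definition nest_alg (N : set (set X)) : set (X -> X) :=
  [set T | bounded_op T /\ forall E, N E -> forall x, E x -> E (T x)].

Definition bimodule (N : set (set X)) (J : set (X -> X)) : Prop :=
  [/\ (forall T, J T -> bounded_op T),
      J (fun _ => 0),
      (forall (a : R[i]) S T, J S -> J T -> J (fun x => a *: S x + T x)),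
      (forall A T, nest_alg N A -> J T -> J (A \o T))
    & (forall A T, nest_alg N A -> J T -> J (T \o A))].

Definition finite_rank (T : X -> X) : Prop :=
  exists (n : nat) (s : 'I_n -> X), range T `<=` lspan (range s).

Definition fin_rank_part (J : set (X -> X)) : set (X -> X) :=
  [set T | J T /\ finite_rank T].

(* Closure of a set of operators in B(X) for the operator norm:
   T is in it iff T is bounded and for all e > 0 there is S in J with
   ||T - S|| <= e, i.e. |T x - S x| <= e |x| for all x. *)
Definition op_norm_closure (J : set (X -> X)) : set (X -> X) :=
  [set T | bounded_op T /\
     forall e : R[i], 0 < e -> exists S, J S /\
        forall x : X, `|T x - S x| <= e * `|x|].

Definition Phi (J : set (X -> X)) (E : set X) : set X :=
  clspan [set y | exists T x, [/\ J T, E x & y = T x]].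

End Nests.

(* Main.v *)
Require Import Defs.
From HB Require Import structures.
From mathcomp Require Import all_boot all_order all_algebra.
From mathcomp Require Import all_classical all_reals all_analysis.
From mathcomp Require Import complex.
Import Order.TTheory GRing.Theory Num.Theory.
Import numFieldNormedType.Exports.
From mathcomp Require Import lra ring.
Local Open Scope classical_set_scope.
Local Open Scope ring_scope.
Local Open Scope complex_scope.
Set Implicit Arguments. Unset Strict Implicit.

Section HB.
Context {R : realType} {X : completeNormedModType R[i]}.

Definition nx (x : X) : R := complex.Re `|x|.

Lemma nxE (x : X) : `|x| = (nx x)%:C.
Proof. by rewrite /nx RRe_real // normr_real. Qed.

Lemma nx_ge0 x : 0 <= nx x.
Proof. by rewrite -ler0c -nxE. Qed.

Lemma nxD x y : nx (x + y) <= nx x + nx y.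
Proof. by rewrite -lecR rmorphD /= -!nxE ler_normD. Qed.

Lemma normcR (r : R) : `|r%:C| = `|r|%:C.
Proof. by rewrite normc_def /= expr0n /= addr0 sqrtr_sqr. Qed.

Lemma nxZ (t : R) x : nx (t%:C *: x) = `|t| * nx x.
Proof. by apply: complexI; rewrite -nxE normrZ normcR nxE rmorphM. Qed.

Lemma nxN x : nx (- x) = nx x.
Proof. by apply: complexI; rewrite -!nxE normrN. Qed.

Lemma normi : `|'i : R[i]| = 1.
Proof. by rewrite normc_def /= expr0n expr1n add0r sqrtr1. Qed.

Lemma nxi x : nx ('i *: x) = nx x.
Proof. by apply: complexI; rewrite -!nxE normrZ normi mul1r. Qed.

Section Good.
Variable c : R.
Hypothesis c0 : 0 <= c.

Definition good (A : set (X * R)) :=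
  [/\ forall x r s, A (x, r) -> A (x, s) -> r = s,
      forall a x y r s, A (x, r) -> A (y, s) -> A (a%:C *: x + y, a * r + s),
      A (0, 0)
    & forall x r, A (x, r) -> r <= c * nx x].

Lemma good_scale A a x r : good A -> A (x, r) -> A (a%:C *: x, a * r).
Proof.
case=> _ L Z _ H; have := L a _ _ _ _ H Z; by rewrite addr0 addr0.
Qed.

Lemma good_add A x y r s : good A -> A (x, r) -> A (y, s) -> A (x + y, r + s).
Proof.
case=> _ L _ _ H1 H2; have := L 1 _ _ _ _ H1 H2; by rewrite scale1r mul1r.
Qed.

Lemma vec_eq (x y z : X) (t : R) : x + t%:C *: z = y -> t != 0 ->
  z = (t^-1)%:C *: (y + (-1)%:C *: x).
Proof.
move=> <- t0; rewrite rmorphN1 scaleN1r addrAC subrr add0r scalerA -rmorphM mulVf //.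
by rewrite scale1r.
Qed.

Lemma extend A z : good A -> (forall r, ~ A (z, r)) ->
  exists B, [/\ good B, A `<=` B & exists r, B (z, r)].
Proof.
move=> gA nz; have [F L Z D] := gA.
pose S := [set t | exists y s, A (y, s) /\ t = s - c * nx (y - z)].
have S0 : S !=set0 by exists (0 - c * nx (0 - z)); exists 0, 0.
have ubS : forall x r, A (x, r) -> ubound S (c * nx (x + z) - r).
  move=> x r Axr _ [y [s [Ays ->]]].
  rewrite lerBrDr addrAC lerBlDr -mulrDr.
  have := D _ _ (good_add gA Axr Ays) => h.
  rewrite addrC; apply: (le_trans h); apply: ler_wpM2l => //.
  have -> : x + y = (x + z) + (y - z) by rewrite addrACA subrr addr0.
  exact: nxD.
have hsS : has_sup S.
  by split=> //; exists (c * nx (0 + z) - 0); exact: ubS.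
pose rho := sup S.
have rho_ge : forall y s, A (y, s) -> s - c * nx (y - z) <= rho.
  by move=> y s Ays; apply: sup_upper_bound => //; exists y, s.
have rho_le : forall x r, A (x, r) -> rho <= c * nx (x + z) - r.
  by move=> x r Axr; apply: ge_sup => //; exact: ubS.
clearbody rho; clear ubS hsS S0 S.
pose B := [set p | exists x r t, A (x, r) /\ p = (x + t%:C *: z, r + t * rho)].
exists B; split; last first.
- by exists rho, 0, 0, 1; split=> //; rewrite add0r scale1r add0r mul1r.
- move=> [x r] Axr; exists x, r, 0; split=> //.
  by rewrite scale0r addr0 mul0r addr0.
split.
- move=> w u1 u2 [x1 [r1 [t1 [A1 [E1 ->]]]]] [x2 [r2 [t2 [A2 [E2 ->]]]]].
  have [et|nt] := eqVneq t1 t2.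
    subst t2; move: E2; rewrite E1 => /addIr ex; subst x2.
    by rewrite (F _ _ _ A1 A2).
  exfalso; have E : x1 + (t1 - t2)%:C *: z = x2.
    by rewrite rmorphB scalerBl addrA -E1 E2 addrK.
  have := vec_eq E; rewrite subr_eq0 => /(_ nt) ez.
  apply: (nz ((t1 - t2)^-1 * (r2 + (-1) * r1))); rewrite {1}ez.
  apply: good_scale => //; apply: good_add => //; exact: good_scale.
- move=> a w1 w2 u1 u2 [x1 [r1 [t1 [A1 [-> ->]]]]] [x2 [r2 [t2 [A2 [-> ->]]]]].
  exists (a%:C *: x1 + x2), (a * r1 + r2), (a * t1 + t2); split; first exact: L.
  congr pair.
    rewrite scalerDr scalerA -rmorphM rmorphD scalerDl.
    by rewrite addrACA.
  by rewrite mulrDr mulrDl mulrA addrACA.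
- by exists 0, 0, 0; split=> //; rewrite scale0r addr0 mul0r addr0.
- move=> w u [x [r [t [Axr [-> ->]]]]].
  have [t0|t0|->] := ltgtP t 0; last first.
  + by rewrite scale0r addr0 mul0r addr0; exact: D.
  + have := rho_le _ _ (good_scale t^-1 gA Axr) => h.
    have tn : t != 0 by rewrite gt_eqF.
    have -> : x + t%:C *: z = t%:C *: ((t^-1)%:C *: x + z).
      by rewrite scalerDr scalerA -rmorphM mulfV // scale1r.
    rewrite nxZ gtr0_norm //.
    set N := nx _ in h *.
    have h2 := ler_wpM2l (ltW t0) h.
    have e : t * (c * N - t^-1 * r) = c * (t * N) - r.
      by field.
    rewrite e in h2. lra.
  + have := rho_ge _ _ (good_scale (- t)^-1 gA Axr) => h.
    have tn : - t != 0 by rewrite oppr_eq0 lt_eqF.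
    have t0' : 0 < - t by rewrite oppr_gt0.
    have tn2 : t != 0 by rewrite lt_eqF.
    have -> : x + t%:C *: z = (- t)%:C *: (((- t)^-1)%:C *: x - z).
      rewrite scalerDr scalerA -rmorphM mulfV // scale1r.
      by rewrite rmorphN scaleNr scalerN opprK.
    rewrite nxZ gtr0_norm //.
    set N := nx _ in h *.
    have h2 := ler_wpM2l (ltW t0') h.
    have e : - t * ((- t)^-1 * r - c * N) = r - c * (- t * N).
      by field.
    rewrite e in h2. lra.
Qed.

Lemma hb_real G0 : good G0 -> exists Fn : X -> R,
  [/\ forall a x y, Fn (a%:C *: x + y) = a * Fn x + Fn y,
      forall x, Fn x <= c * nx x
    & forall x r, G0 (x, r) -> Fn x = r].
Proof.
move=> g0.
pose P := fun A : set (X * R) => A = set0 \/ (good A /\ G0 `<=` A).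
have [A [PA maxA]] : exists A, P A /\ forall B, A `<` B -> ~ P B.
  apply: Zorn_bigcup => Fm FP Ftot.
  have [[A0 [FA0 [p0 A0p0]]] | hn] := pselect (exists A, Fm A /\ A !=set0);
    last first.
    left; apply/seteqP; split=> // p [A FA Ap]; exfalso; apply: hn.
    by exists A; split=> //; exists p.
  right.
  have gF : forall A p, Fm A -> A p -> good A /\ G0 `<=` A.
    by move=> A p FA Ap; case: (FP A FA) => // eA; rewrite eA in Ap.
  split; last first.
    by move=> p Gp; exists A0 => //; have [_ ] := gF _ _ FA0 A0p0; apply.
  split.
  - move=> x r s [A1 F1 H1] [A2 F2 H2]; case: (Ftot _ _ F1 F2) => sub.
    + by have [[Fa _ _ _] _] := gF _ _ F2 H2; exact: Fa _ _ _ (sub _ H1) H2.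
    + by have [[Fa _ _ _] _] := gF _ _ F1 H1; exact: Fa _ _ _ H1 (sub _ H2).
  - move=> a x y r s [A1 F1 H1] [A2 F2 H2]; case: (Ftot _ _ F1 F2) => sub.
    + have [[_ La _ _] _] := gF _ _ F2 H2.
      by exists A2 => //; exact: La _ _ _ _ _ (sub _ H1) H2.
    + have [[_ La _ _] _] := gF _ _ F1 H1.
      by exists A1 => //; exact: La _ _ _ _ _ H1 (sub _ H2).
  - by exists A0 => //; have [[_ _ Za _] _] := gF _ _ FA0 A0p0.
  - move=> x r [A1 F1 H1]; have [[_ _ _ Da] _] := gF _ _ F1 H1; exact: Da.
have [gA sA] : good A /\ G0 `<=` A.
  case: PA => // eA; exfalso; apply: (maxA G0); last by right; split.
  rewrite eA; split=> // h; have [_ _ Z _] := g0; exact: h _ Z.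
have tot : forall z, exists r, A (z, r).
  move=> z; apply/not_existsP => nz.
  have [B [gB sAB [r Bzr]]] := extend gA (fun r h => nz r h).
  apply: (maxA B); last by right; split=> //; exact: subset_trans sA sAB.
  by split=> // h; apply: (nz r); exact: h.
pose Fn z := projT1 (cid (tot z)).
have FnA : forall z, A (z, Fn z) by move=> z; exact: projT2 (cid (tot z)).
have [Fa La _ Da] := gA.
exists Fn; split.
- by move=> a x y; apply: (Fa _ _ _ (FnA _)); exact: La.
- by move=> x; exact: Da.
- by move=> x r Gxr; exact: Fa _ _ _ (FnA _) (sA _ Gxr).
Qed.
End Good.

Lemma cs_scale (M : set X) a u : closed_subspace M -> M u -> M (a *: u).
Proof. by case=> _ Z L Mu; have := L a _ _ Mu Z; rewrite addr0. Qed.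
Lemma cs_add (M : set X) u v : closed_subspace M -> M u -> M v -> M (u + v).
Proof. by case=> _ Z L Mu Mv; have := L 1 _ _ Mu Mv; rewrite scale1r. Qed.
Lemma cs_opp (M : set X) u : closed_subspace M -> M u -> M (- u).
Proof. by move=> cM Mu; rewrite -scaleN1r; exact: cs_scale. Qed.

Lemma ReM (a : R) (l : R[i]) : complex.Re (a%:C * l) = a * complex.Re l.
Proof. by case: l => p q; simpc. Qed.
Lemma ReD (l l' : R[i]) : complex.Re (l + l') = complex.Re l + complex.Re l'.
Proof. by case: l => p q; case: l' => p' q'; simpc. Qed.

Lemma sep_dist (M : set X) z : closed_subspace M -> ~ M z ->
  exists2 e : R, 0 < e & forall y, M y -> e%:C <= `|z - y|.
Proof.
case=> cM _ _ nMz.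
have : nbhs z (~` M) by apply: open_nbhs_nbhs; split=> //; rewrite openC.
move=> /nbhs_ballP [eps eps0 sub].
have epsr : eps \is Num.real by rewrite gtr0_real.
exists (complex.Re eps).
  by rewrite -ltcR RRe_real.
move=> y My; rewrite RRe_real // real_leNgt // ?normr_real //; apply/negP => h.
by apply: (sub y) => //; rewrite -ball_normE /ball_ /=.
Qed.

Lemma i2 : 'i * 'i = -1 :> R[i].
Proof. by rewrite -expr2 sqr_i. Qed.

Lemma alg (A B p q t w : R) :
 (A * p + B * q + t)%:C - 'i * (A * q + B * (- p) + w)%:C =
   (A%:C + 'i * B%:C) * (p%:C - 'i * q%:C) + (t%:C - 'i * w%:C).
Proof. simpc. apply/eqP; rewrite eq_complex /=; apply/andP; split; apply/eqP; ring. Qed.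

Lemma sep_functional (M : set X) z : closed_subspace M -> ~ M z ->
  exists f : X -> R[i], [/\ forall a u v, f (a *: u + v) = a * f u + f v,
      exists2 K, 0 <= K & forall w, `|f w| <= K * `|w|, forall m, M m -> f m = 0 & f z = 1].
Proof.
move=> cM nMz; have [e e0 he] := sep_dist cM nMz.
have [_ M0 _] := cM.
pose c := e^-1; have c0 : 0 <= c by rewrite invr_ge0 ltW.
pose G0 := [set p : X * R | exists m l, M m /\ p = (m + l *: z, complex.Re l)].
have vec : forall m1 m2 l1 l2, m1 + l1 *: z = m2 + l2 *: z -> l1 != l2 ->
    M m1 -> M m2 -> False.
  move=> m1 m2 l1 l2 E nl M1 M2; apply: nMz.
  have E2 : (l1 - l2) *: z = m2 - m1.
    rewrite scalerBl; apply: (addIr (l2 *: z)); rewrite subrK.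
    by apply: (addrI m1); rewrite E addrA subrKC.
  have -> : z = (l1 - l2)^-1 *: (m2 - m1).
    by rewrite -E2 scalerA mulVf ?subr_eq0 // scale1r.
  apply: cs_scale => //; apply: cs_add => //; exact: cs_opp.
have gG : good c G0.
  split.
  - move=> x r s [m1 [l1 [M1 [-> ->]]]] [m2 [l2 [M2 [E ->]]]].
    by case: (eqVneq l1 l2) => [->|nl] //; exfalso; exact: vec E nl M1 M2.
  - move=> a x y r s [m1 [l1 [M1 [-> ->]]]] [m2 [l2 [M2 [-> ->]]]].
    exists (a%:C *: m1 + m2), (a%:C * l1 + l2); split.
      by apply: cs_add => //; exact: cs_scale.
    congr pair; last by rewrite ReD ReM.
    by rewrite scalerDr scalerA scalerDl addrACA.
  - by exists 0, 0; split=> //; rewrite scale0r addr0.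
  - move=> x r [m [l [Mm [-> ->]]]].
    rewrite -lecR rmorphM /= -nxE.
    have [->|nl] := eqVneq l 0.
      by rewrite /= mulr_ge0 // ?normr_ge0 // ler0c.
    have -> : m + l *: z = l *: (z + l^-1 *: m).
      by rewrite scalerDr scalerA mulfV // scale1r addrC.
    have hz : e%:C <= `|z + l^-1 *: m|.
      have := he (- (l^-1 *: m)); rewrite opprK; apply.
      by apply: cs_opp => //; exact: cs_scale.
    have h1 : (complex.Re l)%:C <= `|l|.
      apply: le_trans (normc_ge_Re l); rewrite lecR; exact: ler_norm.
    apply: (le_trans h1).
    have -> : `|l| = c%:C * (`|l| * e%:C).
      by rewrite mulrCA -rmorphM mulVf ?gt_eqF // mulr1.
    rewrite normrZ; apply: ler_wpM2l; first by rewrite ler0c.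
    by apply: ler_wpM2l => //; exact: normr_ge0.
have [F [FL FD FG]] := hb_real c0 gG.
have F0 : F 0 = 0.
  by have := FL 1 0 0; rewrite scale1r addr0 mul1r => h; lra.
have FA : forall x y, F (x + y) = F x + F y.
  by move=> x y; have := FL 1 x y; rewrite scale1r mul1r.
have FZ : forall a x, F (a%:C *: x) = a * F x.
  by move=> a x; have := FL a x 0; rewrite !addr0 F0 addr0.
have Fsc : forall b w, F (b *: w) =
    complex.Re b * F w + complex.Im b * F ('i *: w).
  move=> b w; rewrite -!FZ -FA; congr F.
  by rewrite {1}[b]complexE scalerDl scalerA [_ * 'i]mulrC.
have Fii : forall w, F ('i *: ('i *: w)) = - F w.
  have e1 : (-1 : R[i]) = (-1)%:C by simpc.
  by move=> w; rewrite scalerA i2 e1 FZ mulN1r.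
pose f x := (F x)%:C - 'i * (F ('i *: x))%:C.
have flin : forall a u v, f (a *: u + v) = a * f u + f v.
  move=> a u v; rewrite /f.
  have -> : 'i *: (a *: u + v) = a *: ('i *: u) + 'i *: v.
    by rewrite scalerDr !scalerA mulrC.
  rewrite !FA (Fsc a u) (Fsc a ('i *: u)) Fii.
  by rewrite alg -complexE.

have FN : forall w, F (- w) = - F w.
  have e1 : (-1 : R[i]) = (-1)%:C by simpc.
  by move=> w; rewrite -scaleN1r e1 FZ mulN1r.
have Fabs : forall w, `|F w| <= c * nx w.
  move=> w; rewrite ler_norml; apply/andP; split; last exact: FD.
  by have := FD (- w); rewrite FN nxN => h; lra.
have fbd : forall w, `|f w| <= (2 * c)%:C * `|w|.
  move=> w; rewrite /f; apply: (le_trans (ler_normB _ _)).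
  rewrite normrM normi mul1r !normcR nxE -rmorphM -rmorphD lecR.
  have := Fabs w; have := Fabs ('i *: w); rewrite nxi => h1 h2; lra.
exists f; split => //.
- by exists (2 * c)%:C => //; rewrite ler0c; lra.
- move=> m Mm; rewrite /f.
  have -> : F m = 0.
    by apply: FG; exists m, 0; split=> //; rewrite scale0r addr0.
  have -> : F ('i *: m) = 0.
    apply: FG; exists ('i *: m), 0; split; first exact: cs_scale.
    by rewrite scale0r addr0.
  by rewrite mulr0 subr0.
- rewrite /f.
  have -> : F z = 1.
    by apply: FG; exists 0, 1; split=> //; rewrite scale1r add0r.
  have -> : F ('i *: z) = 0.
    by apply: FG; exists 0, 'i; split=> //; rewrite add0r.
  by rewrite mulr0 subr0.
Qed.

Lemma closure_ballP (A : set X) p : closure A p <->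
  forall e : R[i], 0 < e -> exists y, A y /\ `|p - y| < e.
Proof.
split.
- move=> cl e e0; have [y [Ay By]] := cl _ (nbhsx_ballx p e e0).
  by exists y; split => //; move: By; rewrite -ball_normE.
- move=> h B /nbhs_ballP [e e0 sub]; have [y [Ay hy]] := h e e0.
  by exists y; split => //; apply: sub; rewrite -ball_normE.
Qed.

Lemma bdd_cont (g : X -> X) K : 0 <= K -> (forall u v, g (u - v) = g u - g v) ->
  (forall w, `|g w| <= K * `|w|) -> continuous g.
Proof.
move=> K0 gB gK x; apply/cvgrPdist_lt => eps eps0.
have K1 : 0 < K + 1 by apply: lt_le_trans (ler_wpDl K0 (lexx 1)); exact: ltr01.
apply/nbhs_ballP; exists (eps / (K + 1)); first by apply: divr_gt0.
move=> y; rewrite -ball_normE /ball_ /= => hy.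
rewrite -gB; apply: (le_lt_trans (gK _)).
apply: (@le_lt_trans _ _ ((K + 1) * `|x - y|)).
  by apply: ler_wpM2r; [exact: normr_ge0 | rewrite lerDl ler01].
by rewrite -ltr_pdivlMl // mulrC.
Qed.

Lemma bop0 (T : X -> X) : bounded_op T -> T 0 = 0.
Proof.
case=> L _; have := L 1 0 0; rewrite !scale1r addr0 => h.
by have := congr1 (fun w => w - T 0) h; rewrite subrr addrK => <-.
Qed.

Lemma bopZ (T : X -> X) a u : bounded_op T -> T (a *: u) = a *: T u.
Proof. move=> bT; have [L _] := bT; by have := L a u 0; rewrite (bop0 bT) !addr0. Qed.

Lemma bopD (T : X -> X) u v : bounded_op T -> T (u + v) = T u + T v.
Proof. move=> bT; have [L _] := bT; by have := L 1 u v; rewrite !scale1r. Qed.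

Lemma bopB (T : X -> X) u v : bounded_op T -> T (u - v) = T u - T v.
Proof. by move=> bT; rewrite bopD // -scaleN1r bopZ // scaleN1r. Qed.

Lemma lspan_sub (S C : set X) : closed_subspace C -> S `<=` C -> lspan S `<=` C.
Proof.
move=> cC sub v [n [c [s [Ss ->]]]]; have [_ C0 _] := cC.
apply: (big_ind C) => //; first by move=> u w Cu Cw; exact: cs_add.
by move=> i _; apply: cs_scale => //; exact: sub.
Qed.

Lemma clspan_sub (S C : set X) : closed_subspace C -> S `<=` C -> clspan S `<=` C.
Proof.
move=> cC sub; have [clC _ _] := cC; rewrite (closure_id C).1 //.
by apply: closure_subset; exact: lspan_sub.
Qed.

Lemma sub_clspan (S : set X) : S `<=` clspan S.
Proof.
move=> s Ss; apply: subset_closure; exists 1%N, (fun _ => 1), (fun _ => s).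
by split=> //; rewrite big_ord1 scale1r.
Qed.

Lemma lspan_sub_clspan (S : set X) : lspan S `<=` clspan S.
Proof. exact: subset_closure. Qed.

Lemma clspan_cs (S : set X) : closed_subspace (clspan S).
Proof.
split; first exact: closed_closure.
  apply: subset_closure; exists 0%N, (fun _ => 0), (fun _ => 0).
  by split; [case | rewrite big_ord0].
move=> a u v /closure_ballP hu /closure_ballP hv; apply/closure_ballP => e e0.
have K1 : 0 < `|a| + 1.
  by apply: lt_le_trans (ler_wpDl (normr_ge0 a) (lexx 1)); exact: ltr01.
have d0 : 0 < e / 2 / (`|a| + 1) by rewrite !divr_gt0.
have [u' [Lu hu']] := hu _ d0; have [v' [Lv hv']] := hv _ d0.
exists (a *: u' + v'); split.
  move: Lu Lv => [n [c [s [Ss ->]]]] [m [d [t [St ->]]]].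
  exists (n + m)%N, (fun i => match fintype.split i with inl j => a * c j | inr j => d j end),
    (fun i => match fintype.split i with inl j => s j | inr j => t j end).
  split; first by move=> i; case: (fintype.split i).
  rewrite big_split_ord /= scaler_sumr; congr (_ + _); apply: eq_bigr => i _.
    by have := unsplitK (inl i : 'I_n + 'I_m) => /= ->; rewrite scalerA.
  by have := unsplitK (inr i : 'I_n + 'I_m) => /= ->.
have -> : a *: u + v - (a *: u' + v') = a *: (u - u') + (v - v').
  by rewrite scalerBr addrACA opprD.
apply: (le_lt_trans (ler_normD _ _)); rewrite normrZ.
set d := e / 2 / (`|a| + 1) in d0 hu' hv' *.
have h1 : `|a| * `|u - u'| <= `|a| * d.
  by apply: ler_wpM2l; [exact: normr_ge0 | exact: ltW].
apply: (le_lt_trans (lerD h1 (lexx _))).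
apply: (@lt_le_trans _ _ (`|a| * d + d)); first by rewrite ltrD2l.
have -> : `|a| * d + d = (`|a| + 1) * d by rewrite mulrDl mul1r.
rewrite /d mulrCA mulfV ?gt_eqF // mulr1.
rewrite ler_pdivrMr ?ltr0n //.
by rewrite ler_pMr // ler1n.
Qed.

Lemma key (N : set (set X)) (J : set (X -> X)) (E : set X) T y (M : set X) z :
  nest N -> bimodule N J -> J T -> closed_subspace M ->
  (forall H, N H -> ~ H y -> H `<=` M) -> E z -> ~ M z ->
  Phi (fin_rank_part J) E (T y).
Proof.
move=> nN bJ JT cM HM Ez nMz.
have [fcs ftot _ _ _] := nN.
have [bJop _ _ bL bR] := bJ.
have bT := bJop _ JT.
have [f [flin [K K0 fK] fM fz]] := sep_functional cM nMz.
pose A u := f u *: y.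
have bA : bounded_op A.
  split.
  - by move=> a u v; rewrite /A flin scalerDl scalerA.
  - apply: (@bdd_cont _ (K * `|y|)).
    + by rewrite mulr_ge0 // normr_ge0.
    + move=> u v; rewrite /A.
      have -> : u - v = (-1) *: v + u by rewrite scaleN1r addrC.
      by rewrite flin mulN1r scalerDl scaleNr addrC.
    + move=> w; rewrite /A normrZ mulrAC; apply: ler_wpM2r; [exact: normr_ge0 | exact: fK].
have nA : nest_alg N A.
  split=> // H NH u Hu; rewrite /A.
  have cH := fcs _ NH.
  have [Hy|nHy] := pselect (H y); first exact: cs_scale.
  by rewrite fM ?scale0r; [case: cH | exact: HM NH nHy u Hu].
have J0 : fin_rank_part J (T \o A).
  split; first exact: bR.
  exists 1%N, (fun _ => T y) => _ [u _ <-].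
  exists 1%N, (fun _ => f u), (fun _ => T y); split; first by move=> i; exists i.
  by rewrite big_ord1 /= /A bopZ.
apply: sub_clspan; exists (T \o A), z; split => //.
by rewrite /= /A fz scale1r.
Qed.
End HB.

Local Close Scope complex_scope.
Unset Implicit Arguments.
Set Strict Implicit.

Theorem mainTheorem8 (R : realType) (X : completeNormedModType R[i])
  (N : set (set X)) (J : set (X -> X)) :
  nest N -> bimodule N J ->
  forall E : set X, N E ->
    Phi (fin_rank_part J) E = Phi (op_norm_closure (fin_rank_part J)) E /\
    Phi (op_norm_closure (fin_rank_part J)) E = Phi J E.
Proof.
move=> nN bJ E NE.
have [fcs ftot _ _ _] := nN.
have [bJop _ _ _ _] := bJ.
set J0 := fin_rank_part J; set Jc := op_norm_closure J0.
have csPhi : forall K, closed_subspace (Phi K E) by move=> K; exact: clspan_cs.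
have s1 : Phi J0 E `<=` Phi Jc E.
  apply: clspan_sub => //; move=> _ [T [x [J0T Ex ->]]].
  apply: sub_clspan; exists T, x; split => //.
  split; first by apply: bJop; case: J0T.
  move=> e e0; exists T; split => // w.
  by rewrite subrr normr0 mulr_ge0 // ?ltW // normr_ge0.
have s2 : Phi Jc E `<=` Phi J E.
  apply: clspan_sub => //; move=> _ [T [x [[bTop hT] Ex ->]]].
  apply/closure_ballP => e e0.
  have x1 : 0 < `|x| + 1.
    by apply: lt_le_trans (ler_wpDl (normr_ge0 x) (lexx 1)); exact: ltr01.
  have d0 : 0 < e / (`|x| + 1) by rewrite divr_gt0.
  have [S [[JS _] hS]] := hT _ d0.
  exists (S x); split.
    exists 1%N, (fun _ => 1), (fun _ => S x); split; last by rewrite big_ord1 scale1r.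
    by move=> _; exists S, x.
  apply: (le_lt_trans (hS x)).
  apply: (@lt_le_trans _ _ (e / (`|x| + 1) * (`|x| + 1))).
    by rewrite ltr_pM2l // ltrDl ltr01.
  by rewrite divfK ?gt_eqF.
have s3 : Phi J E `<=` Phi J0 E.
  apply: clspan_sub => //; move=> _ [T [x [JT Ex ->]]].
  pose Gm := clspan (\bigcup_(H in [set H | N H /\ ~ H x]) H).
  have GmH : forall H, N H -> ~ H x -> H `<=` Gm.
    move=> H NH nH; apply: subset_trans (@sub_clspan _ _ _).
    by apply: (@bigcup_sup _ _ H [set H | N H /\ ~ H x] id).
  have [[z [Ez nGz]]|hn] := pselect (exists z, E z /\ ~ Gm z).
    exact: key nN bJ JT (clspan_cs _) GmH Ez nGz.
  have EG : Gm x by apply: contrapT => nG; apply: hn; exists x.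
  have bT := bJop _ JT.
  pose D := [set y | Phi J0 E (T y)].
  have cD : closed_subspace D.
    have [cC C0 CL] := csPhi J0.
    split.
    - have -> : D = T @^-1` Phi J0 E by [].
      by apply: preimage_closed => // y _; case: bT => _; apply.
    - by rewrite /D /= (bop0 bT).
    - move=> a u v Du Dv; rewrite /D /=; have [L _] := bT; rewrite L; exact: CL.
  suff : Gm `<=` D by move/(_ x EG).
  apply: clspan_sub => // y [H [NH nHx] Hy].
  apply: (key nN bJ JT (fcs _ NH) _ Ex nHx).
  move=> H' NH' nH'y; case: (ftot _ _ NH NH') => sub //.
  by exfalso; apply: nH'y; exact: sub _ Hy.
split; apply/seteqP; split => //.
- exact: subset_trans s2 s3.
- exact: subset_trans s3 s1.
Qed.
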